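(* Let $G$ be a finite group and $p$ a prime; let $\mathcal X$ be the set of $G$-conjugacy classes of nonidentity $p$-subgroups of $G$ and sums $\sum_{[K]}$ run over $\mathcal X$. Then the following functions $[H]\mapsto k^{[H]}$ on $\mathcal X$ are weightings, and the Euler characteristics are as stated: (i) $\mathcal T^*_G$: $k^{[H]}=\sum_{[K]}[\mu]([H],[K])$, and $\chi(\mathcal T^*_G)=\sum_{[K]}-[\mu]([K])$; (ii) $\mathcal L^*_G$: $k^{[H]}=\sum_{[K]}[\mu]([H],[K])\,|O^pC_G(K)|$, and $\chi(\mathcal L^*_G)=\sum_{[K]}-[\mu]([K])\,|O^pC_G(K)|$; (iii) $\mathcal F^*_G$: $k^{[H]}=\sum_{[K]}[\mu]([H],[K])\,|C_G(K)|$, and $\chi(\mathcal F^*_G)=\sum_{[K]}-[\mu]([K])\,|C_G(K)|$; (iv) $\mathcal O^*_G$: $k^{[H]}=|H|\sum_{[K]}[\mu]([H],[K])$, and $\chi(\mathcal O^*_G)=\sum_{[H],[K]}|H|\,[\mu]([H],[K])$.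
   Context: $N_G(H,K)=\{g\in G: g^{-1}Hg\le K\}$; $O^p(X)$ is the smallest normal subgroup of $X$ with $p$-group quotient. Categories with objects the nonidentity $p$-subgroups of $G$, composition induced by multiplication: $\mathcal T^*_G(H,K)=N_G(H,K)$, $\mathcal L^*_G(H,K)=O^p(C_G(H))\backslash N_G(H,K)$, $\mathcal F^*_G(H,K)=C_G(H)\backslash N_G(H,K)$, $\mathcal O^*_G(H,K)=N_G(H,K)/K$. For such a category $\mathcal C$, $|\mathcal C(H,K)|$ depends only on the conjugacy classes of $H,K$; a weighting on $\mathcal X$ for $\mathcal C$ means a function $k^{[\bullet]}$ on $\mathcal X$ with $\sum_{[K]\in\mathcal X}|\mathcal C(H,K)|\,k^{[K]}=1$ for every nonidentity $p$-subgroup $H$. $\chi$ is Leinster's Euler characteristic of the category (weighting $k^\bullet$: $\sum_b|\mathcal C(a,b)|k^b=1$ for all $a$; coweighting $k_\bullet$: $\sum_ak_a|\mathcal C(a,b)|=1$ for all $b$; $\chi=\sum k^b=\sum k_a$). $\mu(H,K)$ is the Möbius function of the poset of all subgroups of $G$, $\mu(K)=\mu(1,K)$; $[\mu]([H],[K])=|N_G(H)|^{-1}\sum_{L\in[K]}\mu(H,L)$, where $[K]$ is the set of $G$-conjugates of $K$, and $[\mu]([K])=|N_G(K)|^{-1}\mu(K)$. *)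

(* Defs.v *)
From mathcomp Require Import all_boot all_order all_algebra all_fingroup all_solvable.
Set Implicit Arguments. Unset Strict Implicit. Unset Printing Implicit Defensive.
Import GRing.Theory Num.Theory.
Local Open Scope group_scope.

Section Defs.
Variable gT : finGroupType.
Implicit Types (G H K L X : {group gT}).

Definition nonid_psub G (p : nat) K : bool :=
  [&& K \subset G, p.-group K & K :!=: 1].

(* N_G(H,K) = { g in G : g^-1 H g <= K }  (in mathcomp H :^ g = g^-1 H g) *)
Definition transp G H K : {set gT} := [set g in G | H :^ g \subset K].

Definition Oup (p : nat) X : {set gT} :=
  \bigcap_(N : {group gT} | (N <| X) && p.-group (X / N)) N.

Definition homT G H K : nat := #|transp G H K|.
(* O^p(C_G(H)) \ N_G(H,K): orbits of left multiplication = right cosets Xg *)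
Definition homL G p H K : nat :=
  #|rcosets (Oup p 'C_G(H)%G) (transp G H K)|.
Definition homF G H K : nat := #|rcosets 'C_G(H) (transp G H K)|.
(* N_G(H,K)/K : orbits of right multiplication by K = left cosets gK *)
Definition homO G H K : nat := #|lcosets K (transp G H K)|.

Fixpoint mobius_rec (n : nat) H K : rat :=
  if H \subset K then
    if H == K then 1%R else
    match n with
    | 0 => 0%R
    | n'.+1 => (- \sum_(L : {group gT} | (H \subset L) && (L \proper K))
                    mobius_rec n' H L)%R
    end
  else 0%R.
Definition mobius H K : rat := mobius_rec #|K| H K.
Definition mobius1 K : rat := mobius 1%G K.

Definition cmu G H K : rat :=
  ((#|'N_G(H)|%:R)^-1 * \sum_(L : {group gT} | gval L \in K :^: G) mobius H L)%R.
Definition cmu1 G K : rat := ((#|'N_G(K)|%:R)^-1 * mobius1 K)%R.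

Definition pclasses G p : {set {set {set gT}}} :=
  [set gval K :^: G | K : {group gT} in [pred K | nonid_psub G p K]].
Definition cls_rep (C : {set {set gT}}) : {group gT} :=
  odflt 1%G [pick K : {group gT} | gval K \in C].

Definition is_class_weighting G p (hom : {group gT} -> {group gT} -> nat)
    (k : {set {set gT}} -> rat) : Prop :=
  forall H, nonid_psub G p H ->
    (\sum_(C in pclasses G p) (hom H (cls_rep C))%:R * k C)%R = 1%R.

Definition is_weighting G p (hom : {group gT} -> {group gT} -> nat)
    (w : {group gT} -> rat) : Prop :=
  forall a, nonid_psub G p a ->
    (\sum_(b : {group gT} | nonid_psub G p b) (hom a b)%:R * w b)%R = 1%R.
Definition is_coweighting G p (hom : {group gT} -> {group gT} -> nat)
    (w : {group gT} -> rat) : Prop :=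
  forall b, nonid_psub G p b ->
    (\sum_(a : {group gT} | nonid_psub G p a) w a * (hom a b)%:R)%R = 1%R.

Definition euler_char_is G p (hom : {group gT} -> {group gT} -> nat)
    (x : rat) : Prop :=
  [/\ exists w, is_weighting G p hom w,
      exists v, is_coweighting G p hom v,
      forall w, is_weighting G p hom w ->
        (\sum_(b : {group gT} | nonid_psub G p b) w b)%R = x
    & forall v, is_coweighting G p hom v ->
        (\sum_(a : {group gT} | nonid_psub G p a) v a)%R = x].

End Defs.

(* Main.v *)
Require Import Defs.
From mathcomp Require Import all_boot all_order all_algebra all_fingroup all_solvable.
From mathcomp Require Import ring.
Import GRing.Theory Num.Theory.
Set Implicit Arguments. Unset Strict Implicit. Unset Printing Implicit Defensive.
Local Open Scope group_scope.

Section Mob.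
Variable gT : finGroupType.
Implicit Types (G H K L A : {group gT}).

Lemma mobius_rec_stab H n m K : #|K| <= n -> #|K| <= m ->
  mobius_rec n H K = mobius_rec m H K.
Proof.
elim: n m K => [|n IH] [|m] K hn hm /=; try by [move: hn; rewrite leqNgt cardG_gt0 | move: hm; rewrite leqNgt cardG_gt0].
case: ifP => // _; case: ifP => // _.
congr (- _)%R.
apply: eq_bigr => L /andP[_ pLK]; have := proper_card pLK => lt.
by apply: IH; rewrite -ltnS; apply: leq_trans lt _.
Qed.

Lemma mobiusE H K : mobius H K =
  if H \subset K then if H == K then 1%R else
    (- \sum_(L : {group gT} | (H \subset L) && (L \proper K)) mobius H L)%R
  else 0%R.
Proof.
rewrite /mobius; case hK: #|K| => [|n]; first by move: (cardG_gt0 K); rewrite hK.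
rewrite /=; case: ifP => // _; case: ifP => // _.
congr (- _)%R.
apply: eq_bigr => L /andP[_ pLK]; have := proper_card pLK => lt.
by apply: mobius_rec_stab; rewrite // -ltnS -hK.
Qed.

Lemma mobius0 H K : ~~ (H \subset K) -> mobius H K = 0%R.
Proof. by rewrite mobiusE => /negbTE->. Qed.

Lemma mobius_refl H : mobius H H = 1%R.
Proof. by rewrite mobiusE subxx eqxx. Qed.

Lemma mobius_left A L :
  (\sum_(K : {group gT} | K \subset L) mobius A K)%R = ((A == L)%:R)%R.
Proof.
case sAL: (A \subset L); last first.
  rewrite big1 ?(introF eqP) // => [eAL|K sKL]; first by rewrite eAL subxx in sAL.
  apply: mobius0; apply: contraFN sAL => sAK; exact: subset_trans sKL.
rewrite (bigD1 L) //=; case: eqP => [->|neAL].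
  rewrite mobius_refl big1 ?addr0 // => K /andP[sKL nKL]; apply: mobius0.
  by apply: contra nKL => sLK; apply/eqP/val_inj/eqP; rewrite eqEsubset sKL.
rewrite mobiusE sAL (introF eqP neAL).
have ->: (\sum_(K : {group gT} | (K \subset L) && (K != L)) mobius A K)%R =
   (\sum_(K : {group gT} | (A \subset K) && (K \proper L)) mobius A K)%R.
  rewrite (bigID (fun K => A \subset K)) /= [X in (_ + X)%R]big1 ?addr0; last first.
    by move=> K /andP[_ nAK]; apply: mobius0.
  apply: eq_bigl => K; rewrite properEneq andbC.
  case sAK: (A \subset K); rewrite ?andbF //= andbC; congr (_ && _).
by rewrite addNr.
Qed.

Local Notation T := {group gT}.
Let n := #|{: T}|.
Let ev (i : 'I_n) : T := enum_val i.

Lemma sum_ev (F : T -> rat) : (\sum_(K : T) F K)%R = (\sum_(i < n) F (ev i))%R.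
Proof. by rewrite -(big_enum_val (A := {: T})). Qed.

Lemma ev_inj : injective ev.
Proof. exact: enum_val_inj. Qed.

Lemma mobius_right A L :
  (\sum_(K : {group gT} | A \subset K) mobius K L)%R = ((A == L)%:R)%R.
Proof.
pose M : 'M[rat]_n := (\matrix_(i, j) mobius (ev i) (ev j))%R.
pose Z : 'M[rat]_n := (\matrix_(i, j) ((ev i \subset ev j)%:R))%R.
have MZ : (M *m Z)%R = 1%:M%R.
  apply/matrixP => i j; rewrite !mxE.
  transitivity (\sum_(K : T) mobius (ev i) K * ((K \subset ev j)%:R))%R.
    by rewrite sum_ev; apply: eq_bigr => k _; rewrite !mxE.
  transitivity (\sum_(K : T | K \subset ev j) mobius (ev i) K)%R.
    by rewrite [RHS]big_mkcond; apply: eq_bigr => K _; case: ifP;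
      rewrite ?mulr1 ?mulr0.
  by rewrite mobius_left (inj_eq ev_inj).
have ZM := mulmx1C MZ.
have := congr1 (fun B : 'M[rat]_n => B (enum_rank A) (enum_rank L)) ZM.
rewrite !mxE /= (inj_eq enum_rank_inj) => <-.
rewrite big_mkcond sum_ev; apply: eq_bigr => k _; rewrite !mxE /ev enum_rankK.
rewrite enum_rankK; by case: ifP; rewrite ?mul1r ?mul0r.
Qed.
End Mob.

Section Conj.
Variable gT : finGroupType.
Local Notation T := {group gT}.
Definition cg (g : gT) (L : T) : T := (L :^ g)%G.

Lemma cg_inj g : injective (cg g).
Proof. by move=> A B /(congr1 val) /= /conjsg_inj /val_inj. Qed.

Lemma mobiusJ g H K : mobius (cg g H) (cg g K) = mobius H K.
Proof.
elim: {K}_.+1 {-2}K (ltnSn #|K|) => // m IH K lt.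
rewrite mobiusE [RHS]mobiusE /= conjSg.
have ->: (cg g H == cg g K) = (H == K).
  by apply/eqP/eqP => [/cg_inj|->].
case: ifP => // _; case: ifP => // _; congr (- _)%R.
rewrite (reindex_inj (@cg_inj g)) /=; apply: eq_big => L; first by rewrite conjSg properJ.
move=> /andP[_]; rewrite properJ => pLK; apply: IH; apply: leq_trans (proper_card pLK) _; by rewrite -ltnS.
Qed.
End Conj.

Section Main.
Variables (gT : finGroupType) (G : {group gT}) (p : nat).
Local Notation T := {group gT}.
Local Notation P := (nonid_psub G p).
Local Notation X := (pclasses G p).

Lemma PJ (K : T) g : g \in G -> P (cg g K) = P K.
Proof.
move=> Gg; rewrite /nonid_psub /= pgroupJ -{1}(conjGid Gg) conjSg.
by rewrite (conjsg_eq1 K g).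
Qed.

Lemma sum_P_J g (F : T -> rat) : g \in G ->
  (\sum_(L | P L) F L)%R = (\sum_(L | P L) F (cg g L))%R.
Proof.
move=> Gg; rewrite (reindex_inj (@cg_inj gT g)); apply: eq_bigl => L; exact: PJ.
Qed.

Lemma cardNJ (K : T) g : g \in G -> #|'N_G(cg g K)| = #|'N_G(K)|.
Proof. by move=> Gg; rewrite /= normJ -{1}(conjGid Gg) -conjIg cardJg. Qed.

Lemma cardCJ (K : T) g : g \in G -> #|'C_G(cg g K)| = #|'C_G(K)|.
Proof. by move=> Gg; rewrite /= centJ -{1}(conjGid Gg) -conjIg cardJg. Qed.

Lemma card_conj_set (K L : T) :
  #|[set g in G | (K :^ g == L :> {set gT})]| =
  if gval L \in K :^: G then #|'N_G(K)| else 0.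
Proof.
case: ifP => [/imsetP[h Gh ->]|nL].
  rewrite -(card_rcoset 'N_G(K) h); apply: eq_card => g.
  rewrite inE mem_rcoset in_setI (groupMr _ (groupVr Gh)); congr (_ && _).
  apply/eqP/normP => e; first by rewrite conjsgM e conjsgK.
  by rewrite -[g](mulgKV h) conjsgM e.
apply/eqP; rewrite cards_eq0 -subset0; apply/subsetP => g; rewrite inE.
by case/andP => Gg /eqP e; move: nL; rewrite -e imset_f.
Qed.

Lemma NG_neq0 (K : T) : (#|'N_G(K)|%:R : rat) != 0%R.
Proof. by rewrite pnatr_eq0 -lt0n cardG_gt0. Qed.

Lemma orbit_sum (K : T) (F : T -> rat) :
  (\sum_(L : T | gval L \in K :^: G) F L)%R =
  ((#|'N_G(K)|%:R)^-1 * \sum_(g in G) F (cg g K))%R.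
Proof.
rewrite (partition_big (fun g => cg g K) predT) //=.
have e L : (\sum_(g in G | cg g K == L) F (cg g K))%R =
            (F L *+ (if gval L \in K :^: G then #|'N_G(K)| else 0))%R.
  rewrite -card_conj_set -sumr_const; apply: eq_big => [g|g /andP[_ /eqP ->]] //.
  by rewrite !inE; apply: andb_id2l => _; apply/eqP/eqP => e; [rewrite -e | apply: val_inj; exact: e].
rewrite (eq_bigr _ (fun L _ => e L)) mulr_sumr [LHS]big_mkcond.
apply: eq_bigr => L _; case: ifP => _; last by rewrite mulr0n mulr0.
by rewrite -[(F L *+ _)%R]mulr_natr mulrCA mulVf ?mulr1 // NG_neq0.
Qed.

Lemma class_refl (A : {set gT}) : A \in A :^: G.
Proof. by rewrite -orbitJs orbit_refl. Qed.

Lemma class_eq (A B : {set gT}) : A \in B :^: G -> A :^: G = B :^: G.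
Proof. by rewrite -!orbitJs => /orbit_eqP. Qed.

Lemma class_memP (K0 K : T) : P K0 -> gval K \in K0 :^: G -> P K.
Proof.
move=> PK0 /imsetP[h Gh eK]; have -> : K = cg h K0 by apply: val_inj.
by rewrite PJ.
Qed.

Lemma XP (C : {set {set gT}}) : C \in X ->
  exists2 K0 : T, P K0 & C = K0 :^: G.
Proof. by case/imsetP => K0; rewrite inE => PK0 ->; exists K0. Qed.

Lemma cls_repP (C : {set {set gT}}) : C \in X ->
  [/\ gval (cls_rep C) \in C, P (cls_rep C) & C = cls_rep C :^: G].
Proof.
case/XP => K0 PK0 ->; rewrite /cls_rep; case: pickP => [K /= KC|/(_ K0)].
  by split=> //; [apply: class_memP KC| rewrite (class_eq KC)].
by rewrite /= class_refl.
Qed.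

Lemma in_class_iff (C : {set {set gT}}) (K : T) : C \in X ->
  (P K && (K :^: G == C)) = (gval K \in C).
Proof.
case/XP => K0 PK0 ->; apply/andP/idP => [[_ /eqP <-]|KC]; first exact: class_refl.
by split; [apply: class_memP KC | rewrite (class_eq KC)].
Qed.

Lemma sum_partition (F : T -> rat) :
  (\sum_(K | P K) F K)%R = (\sum_(C in X) \sum_(K : T | gval K \in C) F K)%R.
Proof.
rewrite (partition_big (fun K => gval K :^: G) (mem X)) /=; last first.
  by move=> K PK; apply: imset_f; rewrite inE.
by apply: eq_bigr => C CX; apply: eq_bigl => K; rewrite in_class_iff.
Qed.

Lemma G_neq0 : (#|G|%:R : rat) != 0%R.
Proof. by rewrite pnatr_eq0 -lt0n cardG_gt0. Qed.

Lemma class_sum (F : T -> rat) :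
  (forall K g, P K -> g \in G -> F (cg g K) = F K) ->
  (\sum_(C in X) F (cls_rep C))%R =
  (\sum_(K | P K) F K * #|'N_G(K)|%:R / #|G|%:R)%R.
Proof.
move=> FJ; rewrite sum_partition; apply: eq_bigr => C CX.
have [_ PK eC] := cls_repP CX; set K := cls_rep C.
rewrite [in RHS]eC orbit_sum.
rewrite (eq_bigr (fun _ => F K * #|'N_G(K)|%:R / #|G|%:R)%R) => [|g Gg]; last first.
  by rewrite FJ // cardNJ.
rewrite sumr_const -[(_ *+ #|G|)%R]mulr_natr; have := NG_neq0 K; have := G_neq0.
by move=> h1 h2; rewrite -/K; field; rewrite h1 h2.
Qed.

Lemma P_between (A K L : T) : P A -> P L -> A \subset K -> K \subset L -> P K.
Proof.
case/and3P => _ _ nA /and3P[sLG pL _] sAK sKL.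
by rewrite /nonid_psub (subset_trans sKL sLG) (pgroupS sKL pL) (subG1_contra sAK nA).
Qed.

Lemma inner_right (A L : T) : P A -> P L ->
  (\sum_(K | P K && (A \subset K)) mobius K L)%R = ((A == L)%:R)%R.
Proof.
move=> PA PL; rewrite -(mobius_right A L) [LHS]big_mkcond [RHS]big_mkcond.
apply: eq_bigr => K _; case sAK: (A \subset K); rewrite ?andbF ?andbT //.
case PK: (P K) => //; rewrite mobius0 //; apply: contraFN PK => sKL.
exact: P_between sAK sKL.
Qed.

Lemma inner_left (c B : T) : P c -> P B ->
  (\sum_(a | P a && (a \subset B)) mobius c a)%R = ((c == B)%:R)%R.
Proof.
move=> Pc PB; rewrite -(mobius_left c B) [LHS]big_mkcond [RHS]big_mkcond.
apply: eq_bigr => a _; case saB: (a \subset B); rewrite ?andbF ?andbT //.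
case Pa: (P a) => //; rewrite mobius0 //; apply: contraFN Pa => sca.
exact: P_between sca saB.
Qed.

Lemma transp_sum (H K : T) :
  (#|transp G H K|%:R : rat) = (\sum_(g in G | H :^ g \subset K) 1)%R.
Proof.
rewrite (eq_bigl (fun g => g \in transp G H K)) ?sumr_const // => g.
by rewrite !inE.
Qed.

Lemma transpJ (H K : T) g : g \in G -> #|transp G H (cg g K)| = #|transp G H K|.
Proof.
move=> Gg; rewrite -(card_rcoset (transp G H K) g); apply: eq_card => x.
rewrite mem_rcoset !inE (groupMr _ (groupVr Gg)) /=; congr (_ && _).
by rewrite conjsgM [RHS]sub_conjg invgK.
Qed.

Lemma cls_rep_inv (C : {set {set gT}}) (L : T) : C \in X -> gval L \in C ->
  exists2 h, h \in G & L = cg h (cls_rep C).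
Proof.
move=> CX; have [_ _ eC] := cls_repP CX; rewrite {1}eC => /imsetP[h Gh e].
by exists h => //; apply: val_inj.
Qed.

Lemma W_eq (d : T -> rat) (K : T) :
  (forall K g, P K -> g \in G -> d (cg g K) = d K) ->
  (\sum_(CL in X) cmu G K (cls_rep CL) * d (cls_rep CL))%R =
  ((#|'N_G(K)|%:R)^-1 * \sum_(L | P L) mobius K L * d L)%R.
Proof.
move=> hd; rewrite sum_partition mulr_sumr; apply: eq_bigr => C CX.
have [_ PC eC] := cls_repP CX.
rewrite /cmu -eC -mulrA mulr_suml; congr (_ * _)%R; apply: eq_bigr => L LC.
by have [h Gh ->] := cls_rep_inv CX LC; rewrite hd.
Qed.

Section Gen.
Variables (d e : T -> rat) (hom : T -> T -> nat).
Hypothesis hd : forall K g, P K -> g \in G -> d (cg g K) = d K.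
Hypothesis he : forall K g, P K -> g \in G -> e (cg g K) = e K.
Hypothesis hd0 : forall K, P K -> d K != 0%R.
Hypothesis he0 : forall K, P K -> e K != 0%R.
Hypothesis hhom : forall H K, P H -> P K ->
  ((hom H K)%:R = #|transp G H K|%:R * e K / d H)%R.

Lemma homJ H K g : P H -> P K -> g \in G -> hom H (cg g K) = hom H K.
Proof.
move=> PH PK Gg; apply/eqP; rewrite -(eqr_nat rat) hhom ?PJ //.
by rewrite hhom // transpJ // he.
Qed.

Lemma weighting_gen (k : {set {set gT}} -> rat) :
  (forall C, C \in X -> k C * e (cls_rep C) =
     \sum_(CL in X) cmu G (cls_rep C) (cls_rep CL) * d (cls_rep CL))%R ->
  is_class_weighting G p hom k.
Proof.
move=> hk H PH.
pose F (K : T) : rat := (#|transp G H K|%:R * ((#|'N_G(K)|%:R)^-1 *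
   \sum_(L | P L) mobius K L * d L) / d H)%R.
transitivity (\sum_(C in X) F (cls_rep C))%R.
  apply: (@eq_bigr rat 0%R +%R) => C CX; have [_ PC _] := cls_repP CX.
  rewrite /F -W_eq // -hk // hhom //; have := hd0 PH.
  by move=> h; field.
rewrite class_sum; last first.
  move=> K g PK Gg; rewrite /F transpJ // cardNJ //; congr (_ * (_ * _) / _)%R.
  rewrite [LHS](sum_P_J _ Gg); apply: eq_bigr => L PL; by rewrite mobiusJ hd.
rewrite /F.
transitivity (\sum_(K | P K) \sum_(g in G | H :^ g \subset K)
   (\sum_(L | P L) mobius K L * d L) / (#|G|%:R * d H))%R.
  apply: eq_bigr => K PK.
  have := NG_neq0 K; have := G_neq0; have := hd0 PH; move=> h1 h2 h3.
  transitivity (#|transp G H K|%:R * ((\sum_(L | P L) mobius K L * d L) /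
     (#|G|%:R * d H)))%R; first by field; rewrite h1 h2 h3.
  rewrite transp_sum mulr_suml; apply: eq_bigr => g _; by rewrite mul1r.
rewrite (exchange_big_dep (fun g => g \in G)) /=; last by move=> K g _ /andP[].
transitivity (\sum_(g in G) (#|G|%:R : rat)^-1)%R; last first.
  by rewrite sumr_const -[(_ *+ _)%R]mulr_natl mulfV // G_neq0.
apply: eq_bigr => g Gg.
have PgH : P (cg g H) by rewrite PJ.
rewrite -mulr_suml exchange_big /=.
rewrite (eq_bigr (fun L => (cg g H == L)%:R * d L)%R); last first.
  move=> L PL; rewrite -mulr_suml -(inner_right PgH PL); congr (_ * _)%R.
  by apply: eq_bigl => K; rewrite Gg.
rewrite (bigD1 (cg g H)) //= eqxx mul1r big1 ?addr0 => [|L /andP[_ nL]]; last first.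
  by rewrite eq_sym (negbTE nL) mul0r.
rewrite hd //; have := hd0 PH; have := G_neq0; move=> h1 h2; by field; rewrite h1 h2.
Qed.

Definition uu (a : T) : rat := (\sum_(c | P c) mobius c a / e c)%R.
Definition vv (a : T) : rat := (d a * uu a / #|G|%:R)%R.

Lemma coweighting_gen : is_coweighting G p hom vv.
Proof.
move=> b Pb.
transitivity (\sum_(a | P a) \sum_(g in G | a :^ g \subset b) uu a * e b / #|G|%:R)%R.
  apply: eq_bigr => a Pa; rewrite hhom // /vv.
  transitivity (#|transp G a b|%:R * (uu a * e b / #|G|%:R))%R.
    have := hd0 Pa; have := G_neq0; move=> h1 h2; by field; rewrite h1 h2.
  by rewrite transp_sum mulr_suml; apply: eq_bigr => g _; rewrite mul1r.
rewrite (exchange_big_dep (fun g => g \in G)) /=; last by move=> K g _ /andP[].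
transitivity (\sum_(g in G) (#|G|%:R : rat)^-1)%R; last first.
  by rewrite sumr_const -[(_ *+ _)%R]mulr_natl mulfV // G_neq0.
apply: eq_bigr => g Gg.
have PB : P (cg g^-1 b) by rewrite PJ ?groupV.
rewrite -mulr_suml -mulr_suml.
rewrite (eq_bigl (fun a => P a && (a \subset cg g^-1 b))); last first.
  by move=> a; rewrite Gg /= sub_conjg.
have -> : (\sum_(a | P a && (a \subset cg g^-1 b)) uu a)%R = ((e (cg g^-1 b))^-1)%R.
  rewrite /uu exchange_big /=.
  rewrite (eq_bigr (fun c => (c == cg g^-1 b)%:R / e c)%R); last first.
    by move=> c Pc; rewrite -mulr_suml inner_left.
  rewrite (bigD1 (cg g^-1 b)) //= eqxx mul1r big1 ?addr0 // => c /andP[_ nc].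
  by rewrite (negbTE nc) mul0r.
rewrite he ?groupV //; have := he0 Pb; have := G_neq0; move=> h1 h2.
by field; rewrite h1 h2.
Qed.

Lemma weighting_of_class (k : {set {set gT}} -> rat) :
  is_class_weighting G p hom k ->
  is_weighting G p hom (fun b => k (gval b :^: G) * #|'N_G(b)|%:R / #|G|%:R)%R.
Proof.
move=> hk a Pa; rewrite -[RHS](hk a Pa).
transitivity (\sum_(C in X) (hom a (cls_rep C))%:R * k (gval (cls_rep C) :^: G))%R;
  last by apply: eq_bigr => C CX; have [_ _ <-] := cls_repP CX.
rewrite (class_sum (F := fun K => (hom a K)%:R * k (gval K :^: G))%R); last first.
  move=> K g PK Gg; rewrite homJ //; congr (_ * k _)%R.
  by apply: class_eq; apply: imset_f.
by apply: eq_bigr => K PK; rewrite !mulrA.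
Qed.
End Gen.

Lemma euler_gen (hom : T -> T -> nat) w v x :
  is_weighting G p hom w -> is_coweighting G p hom v ->
  (\sum_(a | P a) v a)%R = x -> euler_char_is G p hom x.
Proof.
move=> hw hv hx.
have key : forall w' v', is_weighting G p hom w' -> is_coweighting G p hom v' ->
   (\sum_(b | P b) w' b)%R = (\sum_(a | P a) v' a)%R.
  move=> w' v' hw' hv'.
  transitivity (\sum_(b | P b) \sum_(a | P a) v' a * (hom a b)%:R * w' b)%R.
    by apply: eq_bigr => b Pb; rewrite -mulr_suml hv' // mul1r.
  transitivity (\sum_(a | P a) v' a * \sum_(b | P b) (hom a b)%:R * w' b)%R.
    rewrite exchange_big /=; apply: eq_bigr => a Pa.
    rewrite mulr_sumr; apply: eq_bigr => b Pb; by rewrite mulrA.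
  by apply: eq_bigr => a Pa; rewrite hw' // mulr1.
split; [by exists w | by exists v | |].
  by move=> w' hw'; rewrite (key w' v) // hx.
by move=> v' hv'; rewrite -(key w v') // (key w v).
Qed.
End Main.

Section Cos.
Variable gT : finGroupType.

Lemma rcosets_partition_set (H : {group gT}) (G : {set gT}) :
  partition (rcosets H G) (H * G).
Proof.
set HG := H * G; have sGHG: {subset G <= HG} by apply/subsetP/mulG_subr.
have defHx x: x \in HG -> [set y in HG | rcoset H x == rcoset H y] = H :* x.
  move=> HGx; apply/setP=> y; rewrite inE !rcosetE (sameP eqP rcoset_eqP).
  by rewrite rcoset_sym; apply/andb_idl/subsetP; rewrite mulGS sub1set.
have:= preim_partitionP (rcoset H) HG; congr (partition _ _); apply/setP=> Hx.
apply/imsetP/idP=> [[x HGx ->] | ]; first by rewrite defHx // mem_rcosets.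
by case/rcosetsP=> x /sGHG-HGx ->; exists x; rewrite ?defHx.
Qed.

Lemma card_rcosets_set (H : {group gT}) (B : {set gT}) :
  (forall h b, h \in H -> b \in B -> h * b \in B) ->
  (#|rcosets H B| * #|H|)%N = #|B|.
Proof.
move=> cl; have eHB : H * B = B.
  apply/eqP; rewrite eqEsubset mulG_subr andbT.
  by apply/subsetP => x /mulsgP[h b Hh Bb ->]; apply: cl.
have := rcosets_partition_set H B; rewrite eHB => part.
rewrite (@card_uniform_partition _ #|H| _ _ _ part) //.
by move=> C /rcosetsP[x _ ->]; rewrite card_rcoset.
Qed.

Lemma card_lcosets_set (K : {group gT}) (B : {set gT}) :
  (forall b k, b \in B -> k \in K -> b * k \in B) ->
  (#|lcosets K B| * #|K|)%N = #|B|.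
Proof.
move=> cl; rewrite -[#|lcosets K B|]card_invg invg_lcosets invGid -[#|B|]card_invg.
apply: card_rcosets_set => k b Kk; rewrite !inE => Bb.
by rewrite invMg cl ?groupV.
Qed.
End Cos.

Section Oup.
Variable gT : finGroupType.
Local Notation T := {group gT}.

Definition OupG p (X : T) : T :=
  Group (group_set_bigcap
          (fun N : T => (N <| X) && p.-group (X / N)) (fun N : T => N)).

Lemma OupG_sub p (X : T) : OupG p X \subset X.
Proof.
apply: (bigcap_inf X) => /=; rewrite normal_refl trivg_quotient.
exact: pgroup1.
Qed.

Lemma Oup_conj p (X : T) g : Oup p (cg g X) = Oup p X :^ g.
Proof.
rewrite /Oup -bigcapJ (reindex_inj (@cg_inj gT g)) /=; apply: eq_bigl => N /=.
rewrite normalJ; case nN: (N <| X) => //=.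
rewrite /pgroup !card_quotient ?indexJg //; first exact: normal_norm.
by apply: normal_norm; rewrite normalJ.
Qed.
End Oup.

Section Inst.
Variables (gT : finGroupType) (G : {group gT}) (p : nat).
Local Notation T := {group gT}.
Local Notation P := (nonid_psub G p).
Local Notation X := (pclasses G p).

Lemma nat_div_eq (a b c : nat) : (a * b)%N = c -> b != 0%N ->
  (a%:R : rat) = (c%:R / b%:R)%R.
Proof.
move=> <- b0; rewrite natrM mulfK //; by rewrite pnatr_eq0.
Qed.

Lemma homT_eq (H K : T) : ((homT G H K)%:R : rat) = (#|transp G H K|%:R * 1 / 1)%R.
Proof. by rewrite mulr1 divr1. Qed.

Lemma homF_eq (H K : T) : P H ->
  ((homF G H K)%:R : rat) = (#|transp G H K|%:R * 1 / #|'C_G(H)|%:R)%R.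
Proof.
move=> PH; rewrite mulr1; apply: nat_div_eq; last by rewrite -lt0n cardG_gt0.
apply: (@card_rcosets_set _ 'C_G(H)%G) => h b Ch; rewrite !inE => /andP[Gb sHb].
move: Ch; rewrite inE => /andP[Gh ch].
rewrite groupM //= conjsgM; move/(subsetP (cent_sub H)): ch => /normP->.
exact: sHb.
Qed.

Lemma homL_eq (H K : T) : P H ->
  ((homL G p H K)%:R : rat) =
  (#|transp G H K|%:R * 1 / #|Oup p 'C_G(H)%G|%:R)%R.
Proof.
move=> PH; rewrite mulr1; apply: nat_div_eq; last first.
  by rewrite -lt0n (cardG_gt0 (OupG p 'C_G(H)%G)).
apply: (@card_rcosets_set _ (OupG p 'C_G(H)%G)) => h b Oh; rewrite !inE.
move=> /andP[Gb sHb]; move/(subsetP (OupG_sub p 'C_G(H)%G)): Oh.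
rewrite inE => /andP[Gh ch].
rewrite groupM //= conjsgM; move/(subsetP (cent_sub H)): ch => /normP->.
exact: sHb.
Qed.

Lemma homO_eq (H K : T) : P K ->
  ((homO G H K)%:R : rat) = (#|transp G H K|%:R * (#|K|%:R)^-1 / 1)%R.
Proof.
move=> /and3P[sKG _ _]; rewrite divr1; apply: nat_div_eq; last first.
  by rewrite -lt0n cardG_gt0.
apply: card_lcosets_set => b k; rewrite !inE => /andP[Gb sHb] Kk.
rewrite (groupM Gb (subsetP sKG _ Kk)) /= conjsgM.
by rewrite -(conjGid Kk) conjSg.
Qed.

Lemma case_gen (d e : T -> rat) (hom : T -> T -> nat) k x :
  (forall K g, P K -> g \in G -> d (cg g K) = d K) ->
  (forall K g, P K -> g \in G -> e (cg g K) = e K) ->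
  (forall K, P K -> d K != 0%R) ->
  (forall K, P K -> e K != 0%R) ->
  (forall H K, P H -> P K ->
     ((hom H K)%:R = #|transp G H K|%:R * e K / d H)%R) ->
  (forall C, C \in X -> k C * e (cls_rep C) =
     \sum_(CL in X) cmu G (cls_rep C) (cls_rep CL) * d (cls_rep CL))%R ->
  (\sum_(a | P a) vv G p d e a)%R = x ->
  [/\ is_class_weighting G p hom k & euler_char_is G p hom x].
Proof.
move=> hd he hd0 he0 hhom hk hx.
have W := weighting_gen hd hd0 hhom hk.
split=> //.
apply: (euler_gen (weighting_of_class he hhom W) (coweighting_gen he hd0 he0 hhom) hx).
Qed.

Lemma cg1 (g : gT) : cg g 1%G = 1%G.
Proof. by apply: val_inj; rewrite /= conjs1g. Qed.

Lemma sumP_mob (a : T) : P a ->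
  (\sum_(c | P c) mobius c a)%R = (- mobius1 a)%R.
Proof.
move=> Pa; have := mobius_right 1%G a.
have -> : (1%G == a) = false.
  apply/negbTE; case/and3P: Pa => _ _; apply: contra => /eqP <-; by [].
rewrite (eq_bigl predT) => [|K]; last by rewrite sub1G.
rewrite (bigD1 1%G) //= addrC => /eqP; rewrite addr_eq0 => /eqP <-.
idtac.
rewrite [LHS]big_mkcond [RHS]big_mkcond; apply: eq_bigr => K _ /=.
case PK: (P K); case nK: (K != 1%G) => //.
  by move/negbFE/eqP: nK => eK; move: PK; rewrite eK; case/and3P => _ _; rewrite eqxx.
rewrite mobius0 //; apply: contraFN PK => sKa.
case/and3P: Pa => saG pa _.
rewrite /nonid_psub (subset_trans sKa saG) (pgroupS sKa pa) /=.
by apply: contra nK => /eqP e1; apply/eqP; apply: val_inj.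
Qed.

Lemma x_gen (d : T -> rat) :
  (forall K g, P K -> g \in G -> d (cg g K) = d K) ->
  (\sum_(a | P a) vv G p d (fun _ => 1%R) a)%R =
  (\sum_(CK in X) - cmu1 G (cls_rep CK) * d (cls_rep CK))%R.
Proof.
move=> hd; rewrite (class_sum (F := fun K => - cmu1 G K * d K)%R); last first.
  move=> K g PK Gg; rewrite /cmu1 cardNJ // hd // /mobius1.
  by rewrite -{1}(cg1 g) mobiusJ.
apply: eq_bigr => a Pa; rewrite /vv /uu.
rewrite (eq_bigr (fun c => mobius c a)) => [|c _]; last by rewrite divr1.
rewrite sumP_mob // /cmu1; have := NG_neq0 G a; have := G_neq0 G => h1 h2.
by field; rewrite h1 h2.
Qed.

Lemma x_O :
  (\sum_(a | P a) vv G p (fun _ => 1%R) (fun K : T => (#|K|%:R)^-1) a)%R =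
  (\sum_(CH in X) \sum_(CK in X)
      (#|cls_rep CH|)%:R * cmu G (cls_rep CH) (cls_rep CK))%R.
Proof.
transitivity (\sum_(CH in X) (#|cls_rep CH|)%:R * ((#|'N_G(cls_rep CH)|%:R)^-1 *
    \sum_(L | P L) mobius (cls_rep CH) L * 1))%R; last first.
  apply: eq_bigr => C CX; rewrite -(W_eq (d := fun _ => 1%R)) // mulr_sumr.
  by apply: eq_bigr => CK _; rewrite mulr1.
rewrite (class_sum (F := fun K : T => (#|K|%:R * ((#|'N_G(K)|%:R)^-1 *
    \sum_(L | P L) mobius K L * 1)))%R); last first.
  move=> K g PK Gg; rewrite /= cardJg cardNJ //; congr (_ * (_ * _))%R.
  rewrite [LHS](sum_P_J p _ Gg); apply: eq_bigr => L PL; by rewrite mobiusJ.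
transitivity (\sum_(a | P a) \sum_(c | P c) mobius c a * #|c|%:R / #|G|%:R)%R.
  apply: eq_bigr => a Pa; rewrite /vv /uu mul1r mulr_suml.
  by apply: eq_bigr => c _; rewrite invrK.
rewrite exchange_big /=; apply: eq_bigr => K PK.
rewrite !mulr_sumr !mulr_suml; apply: eq_bigr => L PL.
have := NG_neq0 G K; have := G_neq0 G => h1 h2.
by field; rewrite h1 h2.
Qed.
End Inst.

Lemma CG_conj (gT : finGroupType) (G K : {group gT}) g : g \in G ->
  ('C_G(cg g K))%G = cg g ('C_G(K))%G.
Proof. by move=> Gg; apply: val_inj; rewrite /= centJ -{1}(conjGid Gg) -conjIg. Qed.

Unset Implicit Arguments.
Close Scope group_scope.

Theorem proposition3p6 (gT : finGroupType) (G : {group gT}) (p : nat) :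
  prime p ->
  let X := pclasses G p in
  let r := @cls_rep gT in
  (* (i) transporter category T*_G *)
  [/\ is_class_weighting G p (homT G)
        (fun CH => \sum_(CK in X) cmu G (r CH) (r CK))%R
    & euler_char_is G p (homT G)
        (\sum_(CK in X) - cmu1 G (r CK))%R] /\
  (* (ii) L*_G *)
  [/\ is_class_weighting G p (homL G p)
        (fun CH => \sum_(CK in X)
                     cmu G (r CH) (r CK) * (#|Oup p ('C_G(r CK))%G|)%:R)%R
    & euler_char_is G p (homL G p)
        (\sum_(CK in X) - cmu1 G (r CK) * (#|Oup p ('C_G(r CK))%G|)%:R)%R] /\
  (* (iii) Frobenius / fusion category F*_G *)
  [/\ is_class_weighting G p (homF G)
        (fun CH => \sum_(CK in X)
                     cmu G (r CH) (r CK) * (#|('C_G(r CK))%g|)%:R)%R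
    & euler_char_is G p (homF G)
        (\sum_(CK in X) - cmu1 G (r CK) * (#|('C_G(r CK))%g|)%:R)%R] /\
  (* (iv) orbit category O*_G *)
  [/\ is_class_weighting G p (homO G)
        (fun CH => (#|r CH|)%:R * \sum_(CK in X) cmu G (r CH) (r CK))%R
    & euler_char_is G p (homO G)
        (\sum_(CH in X) \sum_(CK in X) (#|r CH|)%:R * cmu G (r CH) (r CK))%R].
Proof.
Local Open Scope group_scope.
move=> _ X r.
have one_inv : forall (K : {group gT}) g, nonid_psub G p K -> g \in G ->
  (fun _ : {group gT} => 1%R : rat) (cg g K) = 1%R by [].
have one0 : forall K : {group gT}, nonid_psub G p K -> (1%R : rat) != 0%R.
  by move=> _ _; exact: oner_neq0.
split; [|split; [|split]].
- apply: (@case_gen gT G p (fun _ => 1%R) (fun _ => 1%R) (homT G)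
    (fun CH => \sum_(CK in X) cmu G (r CH) (r CK))%R
    (\sum_(CK in X) - cmu1 G (r CK))%R one_inv one_inv one0 one0
    (fun H K _ _ => homT_eq G H K)).
  + by move=> C CX; rewrite mulr1; apply: eq_bigr => CK _; rewrite mulr1.
  + rewrite x_gen //; apply: eq_bigr => CK _; by rewrite mulr1.
- have hd : forall (K : {group gT}) g, nonid_psub G p K -> g \in G ->
      (fun K : {group gT} => (#|Oup p ('C_G(K))%G|%:R : rat)) (cg g K) =
      (#|Oup p ('C_G(K))%G|%:R : rat).
    by move=> K g _ Gg /=; rewrite CG_conj // Oup_conj cardJg.
  have hd0 : forall K : {group gT}, nonid_psub G p K ->
      (#|Oup p ('C_G(K))%G|%:R : rat) != 0%R.
    by move=> K _; rewrite pnatr_eq0 -lt0n (cardG_gt0 (OupG p ('C_G(K))%G)).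
  apply: (@case_gen gT G p _ (fun _ => 1%R) (homL G p)
    (fun CH => \sum_(CK in X)
                     cmu G (r CH) (r CK) * (#|Oup p ('C_G(r CK))%G|)%:R)%R
    (\sum_(CK in X) - cmu1 G (r CK) * (#|Oup p ('C_G(r CK))%G|)%:R)%R
    hd one_inv hd0 one0 (fun H K PH _ => @homL_eq gT G p H K PH)).
  + by move=> C CX; rewrite mulr1.
  + by rewrite x_gen.
- have hd : forall (K : {group gT}) g, nonid_psub G p K -> g \in G ->
      (fun K : {group gT} => (#|'C_G(K)|%:R : rat)) (cg g K) =
      (#|'C_G(K)|%:R : rat).
    by move=> K g _ Gg /=; rewrite cardCJ.
  have hd0 : forall K : {group gT}, nonid_psub G p K ->
      (#|'C_G(K)|%:R : rat) != 0%R.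
    by move=> K _; rewrite pnatr_eq0 -lt0n cardG_gt0.
  apply: (@case_gen gT G p _ (fun _ => 1%R) (homF G)
    (fun CH => \sum_(CK in X)
                     cmu G (r CH) (r CK) * (#|('C_G(r CK))%g|)%:R)%R
    (\sum_(CK in X) - cmu1 G (r CK) * (#|('C_G(r CK))%g|)%:R)%R
    hd one_inv hd0 one0 (fun H K PH _ => @homF_eq gT G p H K PH)).
  + by move=> C CX; rewrite mulr1.
  + by rewrite x_gen.
- have he : forall (K : {group gT}) g, nonid_psub G p K -> g \in G ->
      (fun K : {group gT} => ((#|K|%:R)^-1 : rat)) (cg g K) = (#|K|%:R)^-1%R.
    by move=> K g _ _ /=; rewrite cardJg.
  have he0 : forall K : {group gT}, nonid_psub G p K ->
      ((#|K|%:R)^-1 : rat) != 0%R.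
    by move=> K _; rewrite invr_eq0 pnatr_eq0 -lt0n cardG_gt0.
  apply: (@case_gen gT G p (fun _ => 1%R) _ (homO G)
    (fun CH => (#|r CH|)%:R * \sum_(CK in X) cmu G (r CH) (r CK))%R
    (\sum_(CH in X) \sum_(CK in X) (#|r CH|)%:R * cmu G (r CH) (r CK))%R
    one_inv he one0 he0 (fun H K _ PK => @homO_eq gT G p H K PK)).
  + move=> C CX; rewrite mulrC mulrA mulVf ?mul1r; last first.
      by rewrite pnatr_eq0 -lt0n cardG_gt0.
    by apply: eq_bigr => CK _; rewrite mulr1.
  + by rewrite x_O.
Qed.
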